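(* There is an absolute constant $C>0$ such that for every $n$ there exist responsibilities $(b_1,\ldots,b_n)$ (and a number $m$ of chores) for which every picking sequence $\pi\in[n]^m$ satisfies at least one of the following: (a) there are agents $p,q$ with $b_p<b_q$ and an additive disvaluation $c_p$ under which the risk averse agent $p$ envies $q$, i.e. $\sum_{r\in R_p}c_p(e_{m-r+1})>\sum_{r\in R_q}c_p(e_{m-r+1})$; or (b) there are an agent $i$ and additive disvaluations under which agent $i$, following the greedy picking strategy, may receive a bundle of disvalue at least $(2-C/n)\,APS_i$.
   Context: Chores are indivisible and disvaluations additive and nonnegative. In a picking sequence, in round $r$ agent $\pi_r$ takes one remaining chore; $R_p$ is the set of rounds of agent $p$; chores are indexed so that $c_p(e_1)\ge\cdots\ge c_p(e_m)$. Greedy strategy: take a remaining chore of smallest own disvalue. $APS_i=\max_p\min\{c_i(S):\sum_{e\in S}p_e\ge b_i\}$ over nonnegative price vectors summing to $1$. *)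

(* Defs.v *)
From mathcomp Require Import all_boot all_order all_algebra.
From mathcomp Require Import classical_sets reals.
Set Implicit Arguments. Unset Strict Implicit. Unset Printing Implicit Defensive.
Import Order.TTheory GRing.Theory Num.Theory.
Local Open Scope ring_scope.

(* Agents are 'I_n, chores are 'I_m, rounds are 'I_m (round r+1 of the paper
   is the ordinal r). *)

Section Defs.
Variable R : realType.

Definition disval (m : nat) (c : 'I_m -> R) : Prop := forall e, 0 <= c e.

Definition cost (m : nat) (c : 'I_m -> R) (S : {set 'I_m}) : R :=
  \sum_(e in S) c e.

Definition price_simplex (m : nat) : set ('I_m -> R) :=
  [set p | (forall e, 0 <= p e) /\ \sum_e p e = 1].

(* The set [set: 'I_m] is always included as a
   candidate (neutral element); it is feasible whenever b <= 1, which holds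
   for all responsibilities considered (positive, summing to 1). *)
Definition aps_val (m : nat) (c : 'I_m -> R) (b : R) (p : 'I_m -> R) : R :=
  \big[Num.min/cost c [set: 'I_m]]_(S : {set 'I_m} | b <= \sum_(e in S) p e)
     cost c S.

Definition APS (m : nat) (c : 'I_m -> R) (b : R) : R :=
  sup [set aps_val c b p | p in @price_simplex m].

(* s lists the chores in nonincreasing order of c: e_(k+1) = s k, i.e.
   c(e_1) >= ... >= c(e_m). *)
Definition sorting (m : nat) (c : 'I_m -> R) (s : 'I_m -> 'I_m) : Prop :=
  injective s /\ forall i j : 'I_m, (i <= j)%N -> c (s j) <= c (s i).

(* With 0-indexed rounds r, e_{m-r+1} (1-indexed r) is s (rev_ord r). *)
Definition risk_averse_envies (n m : nat) (pi : 'I_m -> 'I_n)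
    (c : 'I_m -> R) (p q : 'I_n) : Prop :=
  exists s, sorting c s /\
    \sum_(r : 'I_m | pi r == q) c (s (rev_ord r))
      < \sum_(r : 'I_m | pi r == p) c (s (rev_ord r)).

(* An execution of pi: pick r is the chore taken in round r (all distinct). *)
Definition execution (m : nat) (pick : 'I_m -> 'I_m) : Prop := injective pick.

Definition greedy_for (n m : nat) (pi : 'I_m -> 'I_n) (i : 'I_n)
    (ci : 'I_m -> R) (pick : 'I_m -> 'I_m) : Prop :=
  forall r : 'I_m, pi r = i ->
    forall e : 'I_m, (forall r' : 'I_m, (r' < r)%N -> pick r' != e) ->
      ci (pick r) <= ci e.

Definition bundle (n m : nat) (pi : 'I_m -> 'I_n) (pick : 'I_m -> 'I_m)
    (i : 'I_n) : {set 'I_m} :=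
  [set pick r | r in [set r : 'I_m | pi r == i]].

End Defs.

(* Main.v *)
Require Import Defs.
From mathcomp Require Import all_boot all_order all_algebra.
From mathcomp Require Import classical_sets reals.
From mathcomp Require Import ring lra zify.
Import Order.TTheory GRing.Theory Num.Theory.
Set Implicit Arguments. Unset Strict Implicit. Unset Printing Implicit Defensive.
Local Open Scope ring_scope.


Section Aux.
Variable R : realType.

Definition ind (m : nat) (e0 : 'I_m) : 'I_m -> R := fun e => if e == e0 then 1 else 0.


Lemma ind_simplex m (e0 : 'I_m) : price_simplex (ind e0).
Proof.
split; first by move=> e; rewrite /ind; case: ifP.
rewrite (bigD1 e0) //= big1 ?addr0 /ind ?eqxx // => e /negbTE ->; done.
Qed.

Lemma aps_ub m (c : 'I_m -> R) b : ubound [set aps_val c b p | p in @price_simplex R m] (cost c [set: 'I_m]).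
Proof. by move=> y [q _ <-]; exact: bigmin_le_id. Qed.

Lemma APS_ge m (c : 'I_m -> R) b e0 : (forall e, 0 <= c e) -> 0 < b -> c e0 <= APS c b.
Proof.
move=> c0 b0.
have hs : has_sup [set aps_val c b p | p in @price_simplex R m].
  split; first by exists (aps_val c b (ind e0)); exists (ind e0) => //; exact: ind_simplex.
  by exists (cost c [set: 'I_m]); exact: aps_ub.
apply: le_trans (sup_upper_bound hs _); last by exists (ind e0) => //; exact: ind_simplex.
have cS : forall S : {set 'I_m}, e0 \in S -> c e0 <= cost c S.
  move=> S eS; rewrite /cost (bigD1 e0) //= lerDl; apply: sumr_ge0 => *; exact: c0.
apply: le_bigmin; first by apply: cS; rewrite inE.
move=> S hS; apply: cS; apply/negPn/negP => nS.
move: hS; rewrite big1 ?(lt_geF b0) // => e eS; rewrite /ind; case: eqP => // ee.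
by move: eS; rewrite ee (negbTE nS).
Qed.

Lemma APS_le m k (c : 'I_m -> R) b (f : 'I_m -> 'I_k.+1) T (e0 : 'I_m) :
  b <= (k.+1%:R)^-1 -> (forall j, cost c [set e | f e == j] <= T) -> APS c b <= T.
Proof.
move=> hb hT; apply: ge_sup.
  by exists (aps_val c b (ind e0)); exists (ind e0) => //; exact: ind_simplex.
move=> y [p [p0 p1] <-].
have [j hj] : exists j, b <= \sum_(e in [set e | f e == j]) p e.
  case: (pickP (fun j => b <= \sum_(e in [set e | f e == j]) p e)) => [j hj|hall]; first by exists j.
  exfalso.
  have : \sum_e p e < 1.
    rewrite (partition_big f predT) //=.
    apply: (@lt_le_trans _ _ (\sum_(j < k.+1) b)).
      apply: ltr_sum; first by apply/hasP; exists ord0; rewrite ?mem_index_enum.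
      move=> j _; move: (hall j) => /negbT; rewrite -ltNge => h; apply: le_lt_trans h.
      by under [leRHS]eq_bigl do rewrite inE.
    rewrite sumr_const card_ord -mulr_natr.
    have := ler_wpM2r (ler0n _ k.+1) hb; rewrite mulVf // pnatr_eq0 //.
  by rewrite p1 ltxx.
apply: le_trans (hT j); exact: bigmin_le_cond.
Qed.
End Aux.

Theorem proposition7 (R : realType) :
  exists C : R, 0 < C /\
  forall n : nat, (0 < n)%N ->
  exists (m : nat) (b : 'I_n -> R),
    (forall i, 0 < b i) /\ \sum_i b i = 1 /\
    forall pi : 'I_m -> 'I_n,
      (* (a) *)
      (exists (p q : 'I_n) (cp : 'I_m -> R),
          b p < b q /\ disval cp /\ risk_averse_envies pi cp p q)
      \/
      (* (b) *)
      (exists (i : 'I_n) (ci : 'I_m -> R) (pick : 'I_m -> 'I_m),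
          disval ci /\ 0 < APS ci (b i) /\
          execution pick /\ greedy_for pi i ci pick /\
          (2 - C / n%:R) * APS ci (b i) <= cost ci (bundle pi pick i)).
Proof.
exists 4; split; first by rewrite ltr0n.
move=> n n0.
case: (leqP n 2) => hn.
  have nR : 0 < n%:R :> R by rewrite ltr0n.
  exists 1%N, (fun _ => n%:R^-1).
  split; first by move=> _; rewrite invr_gt0.
  split; first by rewrite sumr_const card_ord -[_^-1 *+ n]mulr_natr mulVf // gt_eqF.
  move=> pi; right; exists (pi ord0), (fun _ => 1), id.
  have hA : 1 <= APS (fun _ : 'I_1 => (1:R)) n%:R^-1.
    by apply: (APS_ge ord0) => //; rewrite invr_gt0.
  split; first by move=> e.
  split; first exact: lt_le_trans ltr01 hA.
  split; first by move=> x y.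
  split; first by move=> r _ e _.
  apply: (@le_trans _ _ 0); last by apply: sumr_ge0.
  apply: mulr_le0_ge0; last exact: le_trans ler01 hA.
  rewrite subr_le0 ler_pdivlMr //.
  have : n%:R <= 2 :> R by rewrite (ler_nat R n 2).
  lra.
case: n n0 hn => [|[|[|n']]] // _ _.
set k := (n'.+3 * n'.+1)%N.
have nR : 0 < n'.+3%:R :> R by rewrite ltr0n.
pose b := fun i : 'I_n'.+3 => if i == ord0 then (n'.+2%:R : R)^-1 else n'.+1%:R / (n'.+2%:R ^+ 2).
have bpos : forall i, 0 < b i.
  move=> i; rewrite /b; case: ifP => _.
    by rewrite invr_gt0 ltr0n.
  by rewrite divr_gt0 ?exprn_gt0 ?ltr0n.
have blt : forall j, j != ord0 -> b j < b ord0.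
  move=> j hj; rewrite /b (negbTE hj) eqxx.
  rewrite ltr_pdivrMr ?exprn_gt0 ?ltr0n // expr2 mulrA mulVf ?pnatr_eq0 // mul1r ltr_nat //.
exists k.+1, b.
split; first exact: bpos.
split.
  rewrite big_ord_recl /b eqxx.
  have hl : forall i : 'I_n'.+2, (lift ord0 i == ord0) = false.
    by move=> i; apply/negbTE; rewrite eq_sym neq_lift.
  rewrite (eq_bigr (fun _ => n'.+1%:R / n'.+2%:R ^+ 2)); last by [].
  rewrite sumr_const card_ord -(mulr_natl (n'.+1%:R / n'.+2%:R ^+ 2)).
  have hx : (n'.+2%:R : R) != 0 by rewrite pnatr_eq0.
  have e1 : n'.+1%:R = n'.+2%:R - 1 :> R by rewrite -[n'.+2%:R]natr1 addrK.
  rewrite e1.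
  have hf : forall x : R, x != 0 -> x^-1 + x * ((x - 1) / x ^+ 2) = 1 by move=> x h; field.
  exact: hf.
move=> pi.
set last : 'I_k.+1 := ord_max.
case: (eqVneq (pi last) ord0) => hl; last first.
  left; exists (pi last), ord0, (fun e : 'I_k.+1 => if val e == 0%N then 1 else 0).
  split; first exact: blt.
  split; first by move=> e; case: ifP.
  exists id; split.
    split; first by move=> x y.
    move=> i j hij /=; case: ifP => [/eqP hj|_]; last by case: ifP.
    by have -> : (val i == 0)%N by move: hij; rewrite hj leqn0.
  rewrite big1; last first.
    move=> r hr; case: ifP => // /eqP h0; exfalso.
    have hr' : r = last.
      apply: val_inj; move: h0 (ltn_ord r); rewrite /= /last /=; lia.
    by move: hr; rewrite hr' (negbTE hl).
  rewrite (bigD1 last) //= subnn eqxx.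
  apply: lt_le_trans (ltr01) _; rewrite lerDl; apply: sumr_ge0 => i _; by case: ifP.
pose N := fun j => \sum_(r | pi r == j) (1:R).
case: (pickP (fun j => N ord0 < N j)) => [j hj | hall].
  left; exists j, ord0, (fun _ => 1).
  split.
    apply: blt; apply/eqP => hj0; move: hj; rewrite hj0 ltxx //.
  split; first by move=> e.
  exists id; split; last exact: hj.
  by split; [move=> x y|].
right.
pose ci := fun e : 'I_k.+1 => if e == last then 1 else (n'.+3%:R : R)^-1.
have ci0 : forall e, 0 <= ci e.
  by move=> e; rewrite /ci; case: ifP => _ //; rewrite invr_ge0 ltW.
have A1 : 1 <= APS ci (b ord0).
  by have := APS_ge (c:=ci) (b:=b ord0) last ci0 (bpos ord0); rewrite /ci eqxx.
have hdiv : forall e : 'I_k.+1, (e %/ n'.+3 <= n'.+1)%N.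
  move=> e; move: (ltn_ord e); rewrite ltnS => /(leq_div2r n'.+3); rewrite /k mulKn //.
pose f := fun e : 'I_k.+1 => (inord (e %/ n'.+3) : 'I_n'.+2).
have finj : forall e1 e2, f e1 = f e2 -> (e1 %/ n'.+3 = e2 %/ n'.+3)%N.
  move=> e1 e2 /(congr1 val); rewrite /f /= !inordK // ltnS; exact: hdiv.
have lastdiv : (last %/ n'.+3 = n'.+1)%N by rewrite /last /= /k mulKn.
have A2 : APS ci (b ord0) <= 1.
  apply: (APS_le (f:=f) last); first by rewrite /b eqxx.
  move=> j.
  case: (boolP (last \in [set e | f e == j])) => hin.
    rewrite /cost (bigD1 last) //= big1 ?addr0 /ci ?eqxx //.
    move=> e /andP [he hne]; exfalso; move/negP: hne; apply.
    apply/eqP; apply: val_inj.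
    move: he hin; rewrite !inE => /eqP he /eqP hl'.
    have := finj e last; rewrite he hl' lastdiv => /(_ erefl) hq.
    have := divn_eq e n'.+3; rewrite hq.
    move: (ltn_ord e); rewrite /last /= /k.
    have := ltn_pmod e (isT : (0 < n'.+3)%N).
    nia.
  rewrite /cost.
  have -> : \sum_(e in [set e | f e == j]) ci e = \sum_(e in [set e | f e == j]) (n'.+3%:R : R)^-1.
    apply: eq_bigr => e he; rewrite /ci; case: (eqVneq e last) => [hel|//].
    by exfalso; move/negP: hin; apply; rewrite -hel.
  rewrite sumr_const -(mulr_natl (n'.+3%:R^-1)).
  apply: (@le_trans _ _ (n'.+3%:R * n'.+3%:R^-1)); last by rewrite mulfV // gt_eqF.
  rewrite ler_wpM2r ?invr_ge0 ?(ltW nR) // ler_nat.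
  pose g := fun e : 'I_k.+1 => (inord (e %% n'.+3) : 'I_n'.+3).
  have : {in [set e | f e == j] &, injective g}.
    move=> e1 e2; rewrite !inE => /eqP h1 /eqP h2 /(congr1 val).
    rewrite /g /= !inordK ?ltn_pmod // => hm.
    apply: val_inj => /=; rewrite (divn_eq e1 n'.+3) (divn_eq e2 n'.+3) hm (finj e1 e2) //.
    by rewrite h1 h2.
  move/card_in_imset <-.
  by have := max_card (mem [set g x | x in [set e | f e == j]]); rewrite card_ord.
have APS1 : APS ci (b ord0) = 1 by apply/le_anti; rewrite A1 A2.
exists ord0, ci, id.
split; first exact: ci0.
split; first by rewrite APS1.
split; first by move=> x y.
split.
  move=> r hr e he; rewrite /ci.
  case: (eqVneq r last) => hrl.
    case: (eqVneq e last) => hel; first by rewrite ?hel ?lexx.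
    have hlt : (e < r)%N.
      rewrite hrl; move: (ltn_ord e); rewrite ltnS leq_eqVlt => /orP [/eqP h|//].
      by exfalso; move/eqP: hel; apply; apply: ord_inj.
    by move: (he e hlt); rewrite eqxx.
  case: ifP => _ //; by rewrite invf_le1 // ler1n.
rewrite APS1 mulr1 /bundle.
rewrite (_ : [set id r | r in [set r | pi r == ord0]] = [set r | pi r == ord0]); last exact: imset_id.
rewrite /cost (eq_bigl (fun r => pi r == ord0)); last by move=> r; rewrite inE.
have hl' : pi last == ord0 by apply/eqP.
rewrite (bigD1 last) //=.
rewrite (eq_bigr (fun _ => n'.+3%:R^-1)); last by move=> i /andP [_ hi]; rewrite /ci (negbTE hi).
rewrite /ci eqxx.
set N' := \sum_(i | (pi i == ord0) && (i != last)) (1:R).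
have -> : \sum_(i | (pi i == ord0) && (i != last)) (n'.+3%:R : R)^-1 = N' * n'.+3%:R^-1.
  rewrite /N' big_distrl; apply: eq_bigr => i _; exact: (esym (mul1r _)).
have hN : N ord0 = 1 + N' by rewrite /N (bigD1 last).
have hm : (k.+1%:R : R) <= n'.+3%:R * N ord0.
  have -> : (k.+1%:R : R) = \sum_(r : 'I_k.+1) (1:R) by rewrite sumr_const card_ord.
  rewrite (partition_big pi predT) //=.
  apply: (@le_trans _ _ (\sum_(j < n'.+3) N ord0)).
    apply: ler_sum => j _; rewrite leNgt; move/negbT: (hall j); done.
  by rewrite sumr_const card_ord mulr_natl.
move: hm; rewrite hN /k -natr1 natrM.
have e1 : (n'.+3%:R : R) = n'.+1%:R + 2 by rewrite -addn2 natrD.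
rewrite e1.
have u1 : (1 : R) <= n'.+1%:R by rewrite ler1n.
have N0 : 0 <= N' by apply: sumr_ge0.

move=> hm.
set u := (n'.+1%:R : R) in u1 hm *.
clearbody u N'.
have hu2 : 0 < u + 2 by lra.
have hz : (u + 2)^-1 * (u + 2) = 1 by rewrite mulVf // gt_eqF.
have z0 : 0 < (u + 2)^-1 by rewrite invr_gt0.
set z := (u + 2)^-1 in hz z0 *.
clearbody z.
have hM : u - 1 <= N'.
  nra.
have h1 : 0 <= (N' + 2 - u) * z by apply: mulr_ge0; [lra | exact: ltW].
have e2 : 1 + N' * z - (2 - 4 * z) = (N' + 2 - u) * z + (z * (u + 2) - 1) by ring.
by rewrite -subr_ge0 e2 hz subrr addr0.
Qed.
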